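(* Let $F=\{f_i\}_{i=1}^N$ be a tight frame for $\mathcal H$. Suppose there exist a dual pair $(F',G')\in\mathcal F^{(1)}$ and a constant $c$ with $\operatorname{Re}\big(\langle g'_i,g'_j\rangle\langle f'_j,f'_i\rangle\big)=c$ for all $i\neq j$. Then $(F,S_F^{-1}F)\in\mathcal F^{(m)}$ for every $m\in\{1,2,\dots,N\}$ if and only if $(F,S_F^{-1}F)$ is a $2$-uniform dual pair, and this holds if and only if $F$ is an equiangular frame.
   Context: $\mathcal H$ is a complex Hilbert space of finite dimension $n$, inner product linear in the first argument, $N\ge n$. A finite sequence $F=\{f_i\}_{i=1}^N$ is a frame if there are $0<A\le B$ with $A\|f\|^2\le\sum_i|\langle f,f_i\rangle|^2\le B\|f\|^2$ for all $f$; tight if one can take $A=B$; equal norm if $\|f_i\|$ is constant; equiangular if it is equal norm and $|\langle f_i,f_j\rangle|$ is the same constant for all $i\ne j$. $S_Ff=\sum_i\langle f,f_i\rangle f_i$; $S_F^{-1}F=\{S_F^{-1}f_i\}$ is the canonical dual. $G=\{g_i\}_{i=1}^N$ is a dual of $F$ if $f=\sum_i\langle f,g_i\rangle f_i$ for all $f$; $(F,G)$ is then an $(N,n)$ dual pair. A dual pair is $1$-uniform if $\langle f_i,g_i\rangle$ is independent of $i$, and $2$-uniform if it is $1$-uniform and $\langle f_i,g_j\rangle\langle f_j,g_i\rangle$ is the same constant for all $i\ne j$. $\mathcal A_m$ is the set of $m$-element subsets of $\{1,\dots,N\}$; $E_{\Lambda,F,G}f=\sum_{i\in\Lambda}\langle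 f,f_i\rangle g_i$. With $\|T\|_{\mathcal F}=\sqrt{\operatorname{tr}(T^*T)}$: $\epsilon^{(m)}_{F,G}=\max_{\Lambda\in\mathcal A_m}\|E_{\Lambda,F,G}\|_{\mathcal F}$; $\epsilon^{(1)}=\inf\{\epsilon^{(1)}_{F,G}:(F,G)\text{ an }(N,n)\text{ dual pair}\}$; $\mathcal F^{(1)}=\{(F,G):\epsilon^{(1)}_{F,G}=\epsilon^{(1)}\}$; for $m>1$, $\epsilon^{(m)}=\inf\{\epsilon^{(m)}_{F,G}:(F,G)\in\mathcal F^{(m-1)}\}$, $\mathcal F^{(m)}=\{(F,G)\in\mathcal F^{(m-1)}:\epsilon^{(m)}_{F,G}=\epsilon^{(m)}\}$. *)

(* Defs.v *)
From mathcomp Require Import all_boot all_order all_algebra.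
From mathcomp Require Import reals complex.
Set Implicit Arguments. Unset Strict Implicit. Unset Printing Implicit Defensive.
Import Order.TTheory GRing.Theory Num.Theory.
Local Open Scope ring_scope.

Section Frames.
Variables (R : realType) (n N : nat).
Local Notation C := (R[i]).
Local Notation vec := ('cV[C]_n).
Local Notation seqv := ('I_N -> vec).

(* inner product, linear in the first argument *)
Definition inner (f g : vec) : C := \sum_(k < n) f k 0 * Num.conj (g k 0).
Definition vnorm (f : vec) : C := sqrtC (inner f f).

Definition adj p q (M : 'M[C]_(p, q)) : 'M[C]_(q, p) := (map_mx Num.conj M)^T.

Definition is_frame (F : seqv) : Prop :=
  exists A B : C, 0 < A /\ A <= B /\
    forall f : vec, A * vnorm f ^+ 2 <= \sum_i `|inner f (F i)| ^+ 2
                    /\ \sum_i `|inner f (F i)| ^+ 2 <= B * vnorm f ^+ 2.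

Definition tight (F : seqv) : Prop :=
  exists A : C, 0 < A /\
    forall f : vec, A * vnorm f ^+ 2 <= \sum_i `|inner f (F i)| ^+ 2
                    /\ \sum_i `|inner f (F i)| ^+ 2 <= A * vnorm f ^+ 2.

Definition equal_norm (F : seqv) : Prop :=
  exists c : C, forall i, vnorm (F i) = c.

Definition equiangular (F : seqv) : Prop :=
  equal_norm F /\ exists c : C, forall i j, i != j -> `|inner (F i) (F j)| = c.

(* frame operator S_F f = sum_i <f,f_i> f_i, as a matrix *)
Definition frame_op (F : seqv) : 'M[C]_n := \sum_i (F i *m adj (F i)).
Definition canon_dual (F : seqv) : seqv := fun i => invmx (frame_op F) *m F i.

Definition is_dual (F G : seqv) : Prop :=
  forall f : vec, f = \sum_i inner f (G i) *: F i.

Definition dual_pair (F G : seqv) : Prop := is_frame F /\ is_dual F G.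

Definition one_uniform (F G : seqv) : Prop :=
  exists c : C, forall i, inner (F i) (G i) = c.

Definition two_uniform (F G : seqv) : Prop :=
  one_uniform F G /\
  exists c : C, forall i j, i != j -> inner (F i) (G j) * inner (F j) (G i) = c.

(* E_{Lambda,F,G} f = sum_{i in Lambda} <f,f_i> g_i, as a matrix *)
Definition erasure (L : {set 'I_N}) (F G : seqv) : 'M[C]_n :=
  \sum_(i in L) (G i *m adj (F i)).

(* Frobenius norm sqrt(tr(T^* T)); tr(T^* T) is real, so we take its real part *)
Definition frob (T : 'M[C]_n) : R := Num.sqrt (complex.Re (\tr (adj T *m T))).

Definition eps (m : nat) (F G : seqv) : R :=
  \big[Num.max/0]_(L : {set 'I_N} | #|L| == m) frob (erasure L F G).

(* inF m F G <-> (F,G) \in F^(m); F^(0) := all dual pairs, and F^(m) is the set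
   of pairs in F^(m-1) attaining the infimum eps^(m) of eps_m over F^(m-1). *)
Fixpoint inF (m : nat) (F G : seqv) : Prop :=
  match m with
  | 0 => dual_pair F G
  | m'.+1 => inF m' F G /\
      forall F' G' : seqv, inF m' F' G' -> eps m'.+1 F G <= eps m'.+1 F' G'
  end.

End Frames.

(* Main.v *)
Require Import Defs.
From mathcomp Require Import all_boot all_order all_algebra.
From mathcomp Require Import reals complex.
From mathcomp Require Import ring lra.
From Stdlib Require Import FunctionalExtensionality.
Set Implicit Arguments. Unset Strict Implicit. Unset Printing Implicit Defensive.
Import Order.TTheory GRing.Theory Num.Theory.
Local Open Scope ring_scope.

Section Basic.
Variable (R : realType).
Local Notation C := (R[i]).

Lemma adj_mul p q r (A : 'M[C]_(p,q)) (B : 'M[C]_(q,r)) :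
  adj (A *m B) = adj B *m adj A.
Proof. by rewrite /adj map_mxM trmx_mul. Qed.

Lemma adjK p q (A : 'M[C]_(p,q)) : adj (adj A) = A.
Proof. by apply/matrixP=> i j; rewrite !mxE conjCK. Qed.

Lemma adjD p q (A B : 'M[C]_(p,q)) : adj (A + B) = adj A + adj B.
Proof. by apply/matrixP=> i j; rewrite !mxE rmorphD. Qed.

Lemma adjZ p q a (A : 'M[C]_(p,q)) : adj (a *: A) = a^* *: adj A.
Proof. by apply/matrixP=> i j; rewrite !mxE rmorphM. Qed.

Lemma adj_sum p q (I : finType) (P : pred I) (A : I -> 'M[C]_(p,q)) :
  adj (\sum_(i | P i) A i) = \sum_(i | P i) adj (A i).
Proof. by apply/matrixP=> i j; rewrite !mxE !summxE rmorph_sum; apply: eq_bigr => k _; rewrite !mxE. Qed.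

Lemma adj1 p : adj (1%:M : 'M[C]_p) = 1%:M.
Proof. by apply/matrixP=> i j; rewrite !mxE eq_sym; case: (i == j); rewrite /= ?conjC1 ?conjC0. Qed.

Variable n : nat.
Local Notation vec := ('cV[C]_n).

Lemma inner_adj (f g : vec) : inner f g = (adj g *m f) 0 0.
Proof. by rewrite /inner !mxE; apply: eq_bigr => k _; rewrite !mxE mulrC. Qed.

Lemma adj_vec (f g : vec) : adj g *m f = (inner f g)%:M.
Proof. by rewrite inner_adj -mx11_scalar. Qed.

Lemma mul_adj_vec p (h : 'M[C]_(p,1)) (f g : vec) : h *m (adj g *m f) = inner f g *: h.
Proof. by rewrite adj_vec mul_mx_scalar. Qed.

Lemma inner_tr (f g : vec) : \tr (f *m adj g) = inner f g.
Proof. by rewrite mxtrace_mulC adj_vec mxtrace_scalar mulr1n. Qed.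

Lemma conj_inner (f g : vec) : (inner f g)^* = inner g f.
Proof. rewrite /inner rmorph_sum; apply: eq_bigr => k _; by rewrite rmorphM /= conjCK mulrC. Qed.

Lemma innerDl (f f' g : vec) : inner (f + f') g = inner f g + inner f' g.
Proof. rewrite /inner -big_split; apply: eq_bigr => k _; by rewrite !mxE mulrDl. Qed.
Lemma innerDr (f g g' : vec) : inner f (g + g') = inner f g + inner f g'.
Proof. rewrite /inner -big_split; apply: eq_bigr => k _; by rewrite !mxE rmorphD mulrDr. Qed.
Lemma innerZl a (f g : vec) : inner (a *: f) g = a * inner f g.
Proof. rewrite /inner mulr_sumr; apply: eq_bigr => k _; by rewrite !mxE mulrA. Qed.
Lemma innerZr a (f g : vec) : inner f (a *: g) = a^* * inner f g.
Proof. rewrite /inner mulr_sumr; apply: eq_bigr => k _; by rewrite !mxE rmorphM mulrCA. Qed.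
Lemma inner_suml (I : finType) (P : pred I) (F : I -> vec) g :
  inner (\sum_(i | P i) F i) g = \sum_(i | P i) inner (F i) g.
Proof.
rewrite /inner exchange_big; apply: eq_bigr => k _; rewrite summxE mulr_suml.
by apply: eq_bigr.
Qed.
Lemma inner_sumr (I : finType) (P : pred I) (F : I -> vec) g :
  inner g (\sum_(i | P i) F i) = \sum_(i | P i) inner g (F i).
Proof. by rewrite -conj_inner inner_suml rmorph_sum /=; apply: eq_bigr => i _; rewrite conj_inner. Qed.
Lemma innerNl (f g : vec) : inner (- f) g = - inner f g.
Proof. by rewrite -scaleN1r innerZl mulN1r. Qed.
Lemma innerNr (f g : vec) : inner f (- g) = - inner f g.
Proof. by rewrite -scaleN1r innerZr rmorphN1 mulN1r. Qed.
Lemma inner0l (g : vec) : inner 0 g = 0.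
Proof. by rewrite -(scale0r (0 : vec)) innerZl mul0r. Qed.

Lemma inner_sqr (f : vec) : inner f f = \sum_k `|f k 0| ^+ 2.
Proof. by apply: eq_bigr => k _; rewrite normCK. Qed.
Lemma inner_ge0 (f : vec) : 0 <= inner f f.
Proof. by rewrite inner_sqr; apply: sumr_ge0 => k _; rewrite exprn_ge0. Qed.
Lemma inner_eq0 (f : vec) : inner f f = 0 -> f = 0.
Proof.
rewrite inner_sqr => /eqP; rewrite psumr_eq0 => [/allP H|k _]; last by rewrite exprn_ge0.
apply/matrixP=> k j; rewrite (ord1 j) mxE.
by have /(_ (mem_index_enum k))/implyP/(_ isT) := H k; rewrite sqrf_eq0 normr_eq0 => /eqP.
Qed.

Definition nf (f : vec) : R := complex.Re (inner f f).
Lemma nfE (f : vec) : inner f f = (nf f)%:C%C.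
Proof. by rewrite /nf complexRe; apply/esym/Creal_ReP/ger0_real/inner_ge0. Qed.
Lemma nf_ge0 (f : vec) : 0 <= nf f.
Proof. by have := inner_ge0 f; rewrite nfE (lecR 0). Qed.

End Basic.

Lemma Re_ge0 (R : realType) (x : R[i]) : 0 <= x -> 0 <= complex.Re x.
Proof.
move=> x0; have : x = (complex.Re x)%:C%C by rewrite complexRe; apply/esym/Creal_ReP/ger0_real.
by move=> E; move: x0; rewrite E (lecR 0).
Qed.

Lemma Re_real (R : realType) (x : R) : complex.Re (x%:C%C) = x.
Proof. by []. Qed.

Section Pair.
Variable (R : realType) (n N : nat).
Local Notation C := (R[i]).
Local Notation vec := ('cV[C]_n).
Local Notation seqv := ('I_N -> vec).

Lemma mx_eq_vec (A B : 'M[C]_n) : (forall f : vec, A *m f = B *m f) -> A = B.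
Proof.
move=> H; apply/matrixP=> i j.
have := congr1 (fun M : 'cV[C]_n => M i 0) (H (delta_mx j 0)).
by rewrite -!colE !mxE.
Qed.

Lemma dual_sum (F G : seqv) : is_dual F G -> \sum_i F i *m adj (G i) = 1%:M.
Proof.
move=> D; apply: mx_eq_vec => f; rewrite mul1mx mulmx_suml {2}(D f).
by apply: eq_bigr => i _; rewrite -mulmxA mul_adj_vec.
Qed.

Lemma sum_dual (F G : seqv) : \sum_i F i *m adj (G i) = 1%:M -> is_dual F G.
Proof.
move=> D f; rewrite -{1}(mul1mx f) -D mulmx_suml.
by apply: eq_bigr => i _; rewrite -mulmxA mul_adj_vec.
Qed.

Lemma dual_sum' (F G : seqv) : is_dual F G -> \sum_i G i *m adj (F i) = 1%:M.
Proof.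
move/dual_sum=> D; rewrite -(adjK (\sum_i G i *m adj (F i))) adj_sum.
rewrite (eq_bigr (fun i => F i *m adj (G i))) ?D ?adj1 // => i _.
by rewrite adj_mul adjK.
Qed.

Lemma dual_trace (F G : seqv) : is_dual F G -> \sum_i inner (F i) (G i) = n%:R.
Proof.
move/dual_sum=> D; rewrite -(mxtrace1 C n) -D raddf_sum /=.
by apply: eq_bigr => i _; rewrite inner_tr.
Qed.

Definition Q (T : 'M[C]_n) : R := complex.Re (\tr (adj T *m T)).

Lemma trQ_ge0 (T : 'M[C]_n) : 0 <= \tr (adj T *m T).
Proof.
rewrite /mxtrace; apply: sumr_ge0 => k _; rewrite mxE; apply: sumr_ge0 => l _.
by rewrite !mxE -normCKC exprn_ge0.
Qed.

Lemma Q_ge0 T : 0 <= Q T.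
Proof. exact/Re_ge0/trQ_ge0. Qed.

Lemma frobE T : frob T = Num.sqrt (Q T).
Proof. by []. Qed.

Lemma tr_sum (I : finType) (P : pred I) (M : I -> 'M[C]_n) :
  \tr (\sum_(i | P i) M i) = \sum_(i | P i) \tr (M i).
Proof. exact: raddf_sum. Qed.

Definition X (F G : seqv) i j := inner (G j) (G i) * inner (F i) (F j).

Lemma Q_erasure (L : {set 'I_N}) (F G : seqv) :
  Q (erasure L F G) = complex.Re (\sum_(i in L) \sum_(j in L) X F G i j).
Proof.
rewrite /Q /erasure adj_sum mulmx_suml tr_sum; congr (complex.Re _).
apply: eq_bigr => i _; rewrite mulmx_sumr tr_sum; apply: eq_bigr => j _.
rewrite adj_mul adjK -mulmxA (mulmxA (adj (G i))) adj_vec mul_scalar_mx -scalemxAr.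
by rewrite mxtraceZ inner_tr.
Qed.

End Pair.

Section ReLemmas.
Variable R : realType.
Lemma ReS (I : finType) (P : pred I) (F : I -> R[i]) :
  complex.Re (\sum_(i | P i) F i) = \sum_(i | P i) complex.Re (F i).
Proof. exact: (raddf_sum (@complex.Re R : Rcomplex R -> R)). Qed.
Lemma ReD (x y : R[i]) : complex.Re (x + y) = complex.Re x + complex.Re y.
Proof. by case: x; case: y. Qed.
Lemma ReN (x : R[i]) : complex.Re (- x) = - complex.Re x.
Proof. by case: x. Qed.
Lemma conjR (x : R) : (x%:C%C : R[i])^* = x%:C%C.
Proof. exact: conjc_real. Qed.
Lemma Re_conj (x : R[i]) : complex.Re (x^*) = complex.Re x.
Proof. by case: x. Qed.
Lemma ReM_real (x : R) (z : R[i]) : complex.Re (x%:C%C * z) = x * complex.Re z.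
Proof. by case: z => a b /=; rewrite mul0r subr0. Qed.
Lemma ReRM (x y : R) : complex.Re (x%:C%C * y%:C%C) = x * y.
Proof. by rewrite ReM_real. Qed.
Lemma real_ReE (x : R[i]) : x \is Num.real -> x = (complex.Re x)%:C%C.
Proof. by move=> xr; rewrite complexRe; apply/esym/Creal_ReP. Qed.
End ReLemmas.

Section CS.
Variable (R : realType) (n : nat).
Local Notation C := (R[i]).
Local Notation vec := ('cV[C]_n).

Lemma inner0r (f : vec) : inner f 0 = 0.
Proof. by rewrite -(scale0r (0 : vec)) innerZr rmorph0 mul0r. Qed.

Lemma CS_Re (f g : vec) : complex.Re (inner f g) ^+ 2 <= nf f * nf g.
Proof.
set a := nf g; set b := complex.Re (inner f g).
have a0 : 0 <= a by exact: nf_ge0.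
have key : nf (a%:C%C *: f - b%:C%C *: g) = a * (a * nf f - b ^+ 2).
  rewrite /nf innerDl !innerDr !innerNl !innerNr !innerZl !innerZr !conjR.
  rewrite !ReD !ReN !ReM_real.
  have -> : complex.Re (inner g f) = b by rewrite -conj_inner Re_conj.
  rewrite -/(nf f) -/(nf g) -/b -/a.
  by rewrite expr2; ring.
have := nf_ge0 (a%:C%C *: f - b%:C%C *: g); rewrite key.
case: (ltrgt0P a) a0 => [a_gt0|//|a_eq0] _.
  by rewrite pmulr_rge0 // subr_ge0 mulrC.
have g0 : g = 0 by apply: inner_eq0; rewrite nfE -/a a_eq0.
by rewrite /b g0 inner0r /= expr0n /= a_eq0 !mulr0.
Qed.

Lemma Re_le_sqrt (f g : vec) : complex.Re (inner f g) <= Num.sqrt (nf f * nf g).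
Proof.
case: (lerP (complex.Re (inner f g)) 0) => [H|H].
  exact: le_trans H (sqrtr_ge0 _).
rewrite -(ger0_norm (ltW H)) -sqrtr_sqr; apply: ler_wsqrtr; exact: CS_Re.
Qed.
End CS.

Section Analysis.
Variable (R : realType) (n N : nat).
Local Notation C := (R[i]).
Local Notation vec := ('cV[C]_n).
Local Notation seqv := ('I_N -> vec).

Definition r : R := n%:R / N%:R.
Definition p (F G : seqv) i := nf (G i) * nf (F i).

Lemma p_ge0 (F G : seqv) i : 0 <= p F G i.
Proof. by rewrite mulr_ge0 ?nf_ge0. Qed.

Lemma X_diag (F G : seqv) i : X F G i i = (p F G i)%:C%C.
Proof. by rewrite /X !nfE -rmorphM. Qed.

Lemma X_sym (F G : seqv) i j : X F G j i = (X F G i j)^*.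
Proof. by rewrite /X rmorphM /= !conj_inner mulrC. Qed.

Lemma ReX_sym (F G : seqv) i j : complex.Re (X F G j i) = complex.Re (X F G i j).
Proof. by rewrite X_sym Re_conj. Qed.

Lemma Q_single (F G : seqv) i : Q (erasure [set i] F G) = p F G i.
Proof. by rewrite Q_erasure !big_set1 X_diag. Qed.

Lemma big_pair (T : nmodType) i j (f : 'I_N -> T) : i != j ->
  \sum_(k in [set i; j]) f k = f i + f j.
Proof. by move=> ij; rewrite big_setU1 ?big_set1 // in_set1. Qed.

Lemma Q_pair (F G : seqv) i j : i != j ->
  Q (erasure [set i; j] F G) = p F G i + p F G j + 2 * complex.Re (X F G i j).
Proof.
move=> ij; rewrite Q_erasure !big_pair // !ReD !X_diag /= ReX_sym.
by rewrite mulr2n mulrDl mul1r; ring.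
Qed.

Lemma eps_ge0 m (F G : seqv) : 0 <= eps m F G.
Proof.
rewrite /eps; apply: (big_ind (fun x => 0 <= x)) => // [x y x0 y0|L _].
  by rewrite le_max x0.
exact: sqrtr_ge0.
Qed.

Lemma eps_ge m (F G : seqv) (L : {set 'I_N}) : #|L| = m -> frob (erasure L F G) <= eps m F G.
Proof. by move=> Lm; apply: (le_bigmax_cond _ (fun L => frob (erasure L F G))); rewrite Lm. Qed.

Lemma eps_le m (F G : seqv) (x : R) : 0 <= x ->
  (forall L : {set 'I_N}, #|L| = m -> frob (erasure L F G) <= x) -> eps m F G <= x.
Proof. by move=> x0 H; apply: bigmax_le => // L /eqP; apply: H. Qed.

Lemma eps1_ge (F G : seqv) i : Num.sqrt (p F G i) <= eps 1 F G.
Proof. by rewrite -Q_single; apply: eps_ge; rewrite cards1. Qed.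

Lemma eps1_le (F G : seqv) (x : R) : 0 <= x -> (forall i, Num.sqrt (p F G i) <= x) -> eps 1 F G <= x.
Proof.
move=> x0 H; apply: eps_le => // L /eqP /cards1P [i ->].
by rewrite /frob -/(Q _) Q_single.
Qed.

Lemma eps2_ge (F G : seqv) i j : i != j ->
  Num.sqrt (p F G i + p F G j + 2 * complex.Re (X F G i j)) <= eps 2 F G.
Proof. by move=> ij; rewrite -Q_pair //; apply: eps_ge; rewrite cards2 ij. Qed.

Lemma eps2_le (F G : seqv) (x : R) : 0 <= x ->
  (forall i j, i != j -> Num.sqrt (p F G i + p F G j + 2 * complex.Re (X F G i j)) <= x) ->
  eps 2 F G <= x.
Proof.
move=> x0 H; apply: eps_le => // L /eqP /cards2P [i [j [ij ->]]].
by rewrite /frob -/(Q _) Q_pair //; apply: H.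
Qed.

Lemma Re_natC (k : nat) : complex.Re (k%:R : C) = k%:R.
Proof. by have -> : (k%:R : C) = (k%:R)%:C%C by rewrite rmorph_nat. Qed.

Lemma sum_Re_diag (F G : seqv) : is_dual F G ->
  \sum_i complex.Re (inner (F i) (G i)) = n%:R.
Proof. by move=> D; rewrite -ReS dual_trace // Re_natC. Qed.

Lemma sum_const_ord (x : R) : \sum_(i < N) x = N%:R * x.
Proof. by rewrite sumr_const card_ord mulr_natl. Qed.

Lemma lower1 (F G : seqv) : is_dual F G -> r <= eps 1 F G.
Proof.
move=> D; case: (posnP N) => [N0|Npos].
  by rewrite /r (_ : (N%:R : R) = 0) ?N0 // invr0 mulr0 eps_ge0.
have : n%:R <= N%:R * eps 1 F G.
  rewrite -(sum_Re_diag D) -sum_const_ord.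
  apply: ler_sum => i _; apply: le_trans (Re_le_sqrt _ _) _.
  by rewrite mulrC -/(p F G i) eps1_ge.
by rewrite /r ler_pdivrMr ?ltr0n // mulrC.
Qed.

Lemma good (F G : seqv) : is_dual F G -> eps 1 F G <= r -> forall i, p F G i = r ^+ 2.
Proof.
move=> D e1 i.
have Npos : (0 < N)%N by case: N i {D e1} => // [[]].
have si i' : Num.sqrt (p F G i') <= r := le_trans (eps1_ge F G i') e1.
have Nr : N%:R * r = n%:R by rewrite /r mulrC divfK // pnatr_eq0 -lt0n.
have S0 : \sum_i' (r - Num.sqrt (p F G i')) = 0.
  apply/eqP; rewrite eq_le; apply/andP; split; last by apply: sumr_ge0 => i' _; rewrite subr_ge0.
  rewrite sumrB sumr_const card_ord -mulr_natl Nr -(sum_Re_diag D) subr_le0.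
  apply: ler_sum => i' _; apply: le_trans (Re_le_sqrt _ _) _.
  by rewrite mulrC.
have nn : forall i' : 'I_N, true -> 0 <= r - Num.sqrt (p F G i').
  by move=> i' _; rewrite subr_ge0.
have /eqP := psumr_eq0P nn S0 (i:=i) isT.
rewrite subr_eq0 => /eqP ->; by rewrite sqr_sqrtr // p_ge0.
Qed.

End Analysis.

Section Analysis2.
Variable (R : realType) (n N : nat).
Local Notation C := (R[i]).
Local Notation vec := ('cV[C]_n).
Local Notation seqv := ('I_N -> vec).
Local Notation r := (@r R n N).

Definition K : R := \sum_(i : 'I_N) \sum_(j | j != i) 1.
Definition T : R := n%:R - r ^+ 2 *+ N.
Definition avg : R := T / K.

Lemma Q_one : Q (1%:M : 'M[C]_n) = n%:R.
Proof. by rewrite /Q adj1 mulmx1 mxtrace1 Re_natC. Qed.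

Lemma sum_setT (V : nmodType) (f : 'I_N -> V) : \sum_(i in [set: 'I_N]) f i = \sum_i f i.
Proof. by apply: eq_bigl => i; rewrite in_setT. Qed.

Lemma erasure_setT (F G : seqv) : erasure setT F G = \sum_i G i *m adj (F i).
Proof. by rewrite /erasure sum_setT. Qed.

Lemma off_sum (F G : seqv) : is_dual F G -> (forall i, p F G i = r ^+ 2) ->
  \sum_i \sum_(j | j != i) complex.Re (X F G i j) = T.
Proof.
move=> D good.
have H := Q_erasure setT F G.
rewrite erasure_setT dual_sum' // Q_one sum_setT ReS in H.
have H' : n%:R = \sum_i (r ^+ 2 + \sum_(j | j != i) complex.Re (X F G i j)).
  rewrite H; apply: eq_bigr => i _.
  by rewrite sum_setT ReS (bigD1 i) //= X_diag good.
by rewrite /T H' big_split /= sumr_const card_ord addrC addrK.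
Qed.

Lemma K_pos : (1 < N)%N -> 0 < K.
Proof.
move=> N1.
have N0 : (0 < N)%N by apply: ltn_trans N1.
pose i0 : 'I_N := Ordinal N0; pose j0 : 'I_N := Ordinal N1.
have ij : j0 != i0 by [].
rewrite /K (bigD1 i0) //= (bigD1 j0) //=.
set a := \sum_(i < N | i != i0) _; set b := \sum_(i < N | _ && _) _.
have a0 : 0 <= a by apply: sumr_ge0 => *; apply: sumr_ge0 => *; exact: ler01.
have b0 : 0 <= b by apply: sumr_ge0 => *; exact: ler01.
lra.
Qed.

Lemma K_avg : (1 < N)%N -> avg * K = T.
Proof. by move=> N1; rewrite /avg divfK // gt_eqF // K_pos. Qed.

Lemma sum_const2 (c : R) : \sum_(i : 'I_N) \sum_(j | j != i) c = c * K.
Proof.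
rewrite /K mulr_sumr; apply: eq_bigr => i _; rewrite mulr_sumr.
by apply: eq_bigr => j _; rewrite mulr1.
Qed.

Lemma off_const (F G : seqv) c : is_dual F G -> (forall i, p F G i = r ^+ 2) ->
  (1 < N)%N -> (forall i j, i != j -> complex.Re (X F G i j) = c) -> c = avg.
Proof.
move=> D good N1 H.
have := off_sum D good.
rewrite (eq_bigr (fun i => \sum_(j | j != i) c)); last first.
  by move=> i _; apply: eq_bigr => j ji; rewrite H // eq_sym.
rewrite sum_const2 => E.
by rewrite /avg -E mulfK // gt_eqF // K_pos.
Qed.

Lemma all_le_avg (F G : seqv) : is_dual F G -> (forall i, p F G i = r ^+ 2) ->
  (1 < N)%N -> (forall i j, i != j -> complex.Re (X F G i j) <= avg) ->
  forall i j, i != j -> complex.Re (X F G i j) = avg.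
Proof.
move=> D good N1 H i j ij.
have S0 : \sum_i \sum_(j | j != i) (avg - complex.Re (X F G i j)) = 0.
  rewrite (eq_bigr (fun i => \sum_(j | j != i) avg - \sum_(j | j != i) complex.Re (X F G i j))).
    by rewrite sumrB sum_const2 K_avg // off_sum // subrr.
  by move=> i' _; rewrite sumrB.
have nn1 : forall i' : 'I_N, true -> 0 <= \sum_(j | j != i') (avg - complex.Re (X F G i' j)).
  by move=> i' _; apply: sumr_ge0 => j' ji; rewrite subr_ge0 H // eq_sym.
have S1 := psumr_eq0P nn1 S0 (i:=i) isT.
have nn2 : forall j' : 'I_N, j' != i -> 0 <= avg - complex.Re (X F G i j').
  by move=> j' ji; rewrite subr_ge0 H // eq_sym.
have ji : j != i by rewrite eq_sym.
have /eqP := psumr_eq0P nn2 S1 ji.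
by rewrite subr_eq0 => /eqP ->.
Qed.

Lemma exists_ge_avg (F G : seqv) : is_dual F G -> (forall i, p F G i = r ^+ 2) ->
  (1 < N)%N -> exists i j, i != j /\ avg <= complex.Re (X F G i j).
Proof.
move=> D good N1.
case: (boolP [exists i, exists j, (i != j) && (avg <= complex.Re (X F G i j))]).
  by move=> /existsP [i /existsP [j /andP [ij H]]]; exists i, j.
move=> /existsPn Hn.
have Hlt : forall i j, i != j -> complex.Re (X F G i j) < avg.
  move=> i j ij; have /existsPn/(_ j) := Hn i.
  by rewrite ij /= ltNge.
have N0 : (0 < N)%N by apply: ltn_trans N1.
pose i0 : 'I_N := Ordinal N0; pose j0 : 'I_N := Ordinal N1.
have ij : i0 != j0 by [].
have := all_le_avg D good N1 (fun i j ij => ltW (Hlt i j ij)) ij.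
by move: (Hlt _ _ ij) => /[swap] -> ; rewrite ltxx.
Qed.

Lemma Q_unif (F G : seqv) c (L : {set 'I_N}) : (forall i, p F G i = r ^+ 2) ->
  (forall i j, i != j -> complex.Re (X F G i j) = c) ->
  Q (erasure L F G) = \sum_(i in L) (r ^+ 2 + \sum_(j in L | j != i) c).
Proof.
move=> good H; rewrite Q_erasure ReS; apply: eq_bigr => i Li.
rewrite ReS (bigD1 i Li) /= X_diag good; congr (_ + _).
by apply: eq_bigr => j /andP [_ ji]; rewrite H // eq_sym.
Qed.

End Analysis2.

Section Tight.
Variable (R : realType) (n N : nat).
Local Notation C := (R[i]).
Local Notation vec := ('cV[C]_n).
Local Notation seqv := ('I_N -> vec).

Lemma polar (D : 'M[C]_n) : (forall f : vec, inner (D *m f) f = 0) -> D = 0.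
Proof.
move=> H.
have e1 x y : inner (D *m x) y + inner (D *m y) x = 0.
  have := H (x + y); rewrite mulmxDr !innerDl !innerDr !H add0r addr0.
  by [].
have e2 x y : inner (D *m x) y = inner (D *m y) x.
  have := e1 x ('i *: y); rewrite -scalemxAr innerZl innerZr conjCi.
  rewrite mulNr addrC -mulrBr => /eqP; rewrite mulf_eq0 (negbTE (neq0Ci _)) /= subr_eq0.
  by move=> /eqP ->.
have e3 x y : inner (D *m x) y = 0.
  have := e1 x y; rewrite -e2 => /eqP; rewrite -mulr2n -mulr_natl mulf_eq0 pnatr_eq0 /=.
  by move=> /eqP.
apply: mx_eq_vec => f; rewrite mul0mx; apply: inner_eq0; exact: e3.
Qed.

Lemma frame_op_mul (F : seqv) (f : vec) : frame_op F *m f = \sum_i inner f (F i) *: F i.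
Proof. by rewrite /frame_op mulmx_suml; apply: eq_bigr => i _; rewrite -mulmxA mul_adj_vec. Qed.

Lemma quad (F : seqv) (f : vec) :
  inner (frame_op F *m f) f = \sum_i `|inner f (F i)| ^+ 2.
Proof.
rewrite frame_op_mul inner_suml; apply: eq_bigr => i _.
by rewrite innerZl normCK conj_inner.
Qed.

Lemma vnorm2 (f : vec) : vnorm f ^+ 2 = inner f f.
Proof. exact: sqrtCK. Qed.

Lemma tight_op (F : seqv) : tight F -> exists A : C, 0 < A /\ frame_op F = A%:M.
Proof.
move=> [A [A0 HA]]; exists A; split => //.
apply/eqP; rewrite -subr_eq0; apply/eqP/polar => f.
rewrite mulmxBl innerDl innerNl quad mul_scalar_mx innerZl.
have [h1 h2] := HA f; rewrite vnorm2 in h1 h2.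
by rewrite (@le_anti _ _ (\sum_i `|inner f (F i)| ^+ 2) (A * inner f f)) ?h1 ?h2 // subrr.
Qed.

Variable (F : seqv) (A : C).
Hypothesis A0 : 0 < A.
Hypothesis FA : frame_op F = A%:M.

Lemma A_conj : A^* = A.
Proof. exact/conj_Creal/gtr0_real. Qed.
Lemma Ai_conj : (A^-1)^* = A^-1.
Proof. by rewrite fmorphV /= A_conj. Qed.
Lemma A_neq0 : A != 0.
Proof. by rewrite gt_eqF. Qed.

Lemma canonE : canon_dual F = fun i => A^-1 *: F i.
Proof. by apply: functional_extensionality => i; rewrite /canon_dual FA invmx_scalar mul_scalar_mx. Qed.

Local Notation G := (fun i => A^-1 *: F i).

Lemma tight_dual : is_dual F G.
Proof.
apply: sum_dual.
rewrite (eq_bigr (fun i => A^-1 *: (F i *m adj (F i)))); last first.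
  by move=> i _; rewrite adjZ Ai_conj scalemxAr.
by rewrite -scaler_sumr -/(frame_op F) FA scale_scalar_mx mulVf // A_neq0.
Qed.

Lemma tight_frame : tight F -> is_frame F.
Proof. by move=> [B [B0 H]]; exists B, B; split => //; split. Qed.

Lemma FG_inner i j : inner (F i) (G j) = A^-1 * inner (F i) (F j).
Proof. by rewrite innerZr Ai_conj. Qed.

Lemma FG_X i j : X F G i j = A^-1 * A^-1 * (`|inner (F i) (F j)| ^+ 2).
Proof.
by rewrite /X innerZl innerZr Ai_conj normCK conj_inner; ring.
Qed.

Lemma FG_prod i j : inner (F i) (G j) * inner (F j) (G i) = X F G i j.
Proof.
by rewrite FG_X !FG_inner normCK conj_inner; ring.
Qed.

Lemma FG_X_ge0 i j : 0 <= X F G i j.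
Proof. by rewrite FG_X mulr_ge0 ?exprn_ge0 // mulr_ge0 // invr_ge0 ltW. Qed.

Lemma FG_diag_ge0 i : 0 <= inner (F i) (G i).
Proof. by rewrite FG_inner mulr_ge0 ?inner_ge0 // invr_ge0 ltW. Qed.

Lemma FG_p i : p F G i = complex.Re (inner (F i) (G i)) ^+ 2.
Proof.
apply: (@complexI R); rewrite rmorphXn /= -real_ReE; last exact/ger0_real/FG_diag_ge0.
by rewrite -X_diag /X innerZl innerZr Ai_conj; ring.
Qed.

End Tight.

From mathcomp Require Import cyclic separable cyclotomic.

Section Harm.
Variable (R : realType).
Local Notation C := (R[i]).

Lemma prim_root_C (N : nat) : (0 < N)%N -> exists z : C, N.-primitive_root z.
Proof.
move=> N_gt0.
pose q : {poly C} := 'X^N - 1; have [rs Dp] := closed_field_poly_normal q.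
rewrite (monicP _) ?monicXnsubC // scale1r in Dp.
have rn1: all N.-unity_root rs by apply/allP=> z; rewrite -root_prod_XsubC -Dp.
have sz_r: (N < (size rs).+1)%N.
  by rewrite -(size_prod_XsubC rs id) -Dp size_XnsubC.
have [|z _ Hz] := hasP (has_prim_root N_gt0 rn1 _ sz_r); last by exists z.
by rewrite -separable_prod_XsubC -Dp separable_Xn_sub_1 // pnatr_eq0 -lt0n.
Qed.

End Harm.

Section Harm2.
Variable (R : realType) (n N : nat).
Local Notation C := (R[i]).
Local Notation vec := ('cV[C]_n).
Hypothesis nN : (n <= N)%N.
Hypothesis N0 : (0 < N)%N.
Variable z : C.
Hypothesis zP : N.-primitive_root z.

Lemma z_neq0 : z != 0.
Proof. by rewrite (prim_root_eq0 zP) -lt0n. Qed.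

Lemma normz : `|z| = 1.
Proof.
apply/eqP; rewrite -(pexpr_eq1 N0) // -normrX (prim_expr_order zP) normr1 //.
Qed.

Lemma conjz : z^* = z^-1.
Proof.
have H : z * z^* = 1 by rewrite -normCK normz expr1n.
by apply: (mulfI z_neq0); rewrite H mulfV // z_neq0.
Qed.

Lemma conjzX k : (z ^+ k)^* = (z ^+ k)^-1.
Proof. by rewrite rmorphXn /= conjz exprVn. Qed.

Lemma conj_natV (k : nat) : ((k%:R : C)^-1)^* = (k%:R)^-1.
Proof. by rewrite fmorphV /= rmorph_nat. Qed.

Definition hf (i : 'I_N) : vec := \col_(k < n) z ^+ (i * k).
Definition hg (i : 'I_N) : vec := (N%:R : C)^-1 *: hf i.

Lemma hsum (k l : 'I_n) :
  \sum_(i < N) z ^+ (i * k) * (z ^+ (i * l))^* = if k == l then N%:R else 0.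
Proof.
pose w := z ^+ k / z ^+ l.
have E : forall i : 'I_N, z ^+ (i * k) * (z ^+ (i * l))^* = w ^+ i.
  move=> i; rewrite conjzX /w exprMn exprVn -!exprM mulnC (mulnC l).
  by [].
rewrite (eq_bigr _ (fun i _ => E i)).
have zk0 : z ^+ k != 0 by rewrite expf_neq0 // z_neq0.
have zl0 : z ^+ l != 0 by rewrite expf_neq0 // z_neq0.
case: eqP => [kl|kl].
  have -> : w = 1 by rewrite /w kl divff.
  by rewrite (eq_bigr (fun _ => 1)) => [|i _]; rewrite ?expr1n // sumr_const card_ord.
have w1 : w - 1 != 0.
  rewrite subr_eq0 /w; apply/negP => /eqP H.
  have : z ^+ k = z ^+ l by rewrite -[z ^+ k](divfK zl0) H mul1r.
  move/eqP; rewrite (eq_prim_root_expr zP) !modn_small => [/eqP /val_inj //||].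
  - exact: leq_trans (ltn_ord l) nN.
  - exact: leq_trans (ltn_ord k) nN.
have wN : w ^+ N = 1.
  by rewrite /w exprMn exprVn -!exprM mulnC (mulnC l) !exprM (prim_expr_order zP) !expr1n invr1 mulr1.
have := subrX1 w N; rewrite wN subrr => /esym/eqP; rewrite mulf_eq0 (negbTE w1) /=.
by move/eqP.
Qed.

Lemma Nneq0 : (N%:R : C) != 0.
Proof. by rewrite pnatr_eq0 -lt0n. Qed.

Lemma hdual : \sum_i hf i *m adj (hg i) = 1%:M.
Proof.
apply/matrixP => k l; rewrite summxE !mxE.
rewrite (eq_bigr (fun i : 'I_N => (N%:R : C)^-1 * (z ^+ (i * k) * (z ^+ (i * l))^*))).
  rewrite -mulr_sumr hsum; case: (k == l) => /=; rewrite ?mulr0 //.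
  by rewrite mulVf // Nneq0.
move=> i _; rewrite !mxE big_ord1 !mxE rmorphM /= conj_natV.
by rewrite mulrCA.
Qed.

Lemma hframe_op : frame_op hf = (N%:R : C)%:M.
Proof.
rewrite /frame_op (eq_bigr (fun i => (N%:R : C) *: (hf i *m adj (hg i)))).
  by rewrite -scaler_sumr hdual scale_scalar_mx mulr1.
move=> i _; rewrite /hg adjZ conj_natV -scalemxAr scalerA mulfV ?scale1r //.
exact: Nneq0.
Qed.

Lemma hframe : is_frame hf.
Proof.
have N0' : (0 : C) < N%:R by rewrite ltr0n.
exists N%:R, N%:R; split => //; split => //.
move=> f; rewrite -quad hframe_op mul_scalar_mx innerZl vnorm2.
by split.
Qed.

Lemma hnorm i : inner (hf i) (hf i) = n%:R.
Proof.
rewrite inner_sqr (eq_bigr (fun _ => 1)) ?sumr_const ?card_ord // => k _.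
by rewrite mxE normrX normz !expr1n.
Qed.

Lemma hp i : p hf hg i = (r R n N) ^+ 2.
Proof.
apply: (@complexI R); rewrite rmorphXn /= -X_diag /X /hg innerZl innerZr conj_natV hnorm.
rewrite /r fmorph_div /= !rmorph_nat.
by rewrite expr2; field; exact: Nneq0.
Qed.

Lemma harmonic_pair : exists F0 G0 : 'I_N -> vec, dual_pair F0 G0 /\ eps 1 F0 G0 <= r R n N.
Proof.
exists hf, hg; split; first by split; [exact: hframe | exact: sum_dual hdual].
have r0 : 0 <= r R n N by rewrite /r divr_ge0 ?ler0n.
apply: eps1_le => // i; rewrite hp sqrtr_sqr ger0_norm //.
Qed.

End Harm2.

Lemma harmonic (R : realType) (n N : nat) : (n <= N)%N -> (0 < N)%N ->
  exists F0 G0 : 'I_N -> 'cV[R[i]]_n, dual_pair F0 G0 /\ eps 1 F0 G0 <= r R n N.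
Proof.
move=> nN N0; have [z zP] := prim_root_C R N0.
exact: (@harmonic_pair R n N nN N0 z zP).
Qed.

Section Tight2.
Variable (R : realType) (n N : nat).
Local Notation C := (R[i]).
Local Notation vec := ('cV[C]_n).
Local Notation seqv := ('I_N -> vec).
Variable (F : seqv) (A : C).
Hypothesis A0 : 0 < A.
Local Notation G := (fun i => A^-1 *: F i).

Lemma unif_good : is_dual F G ->
  (one_uniform F G <-> forall i, p F G i = r R n N ^+ 2).
Proof.
move=> D; split.
  move=> [c Hc] i.
  have Npos : (0 < N)%N by case: N i {Hc D} => // [[]].
  have E : N%:R * complex.Re c = n%:R.
    rewrite -(sum_Re_diag D) -sum_const_ord; apply: eq_bigr => j _.
    by rewrite Hc.
  have Ec : complex.Re c = r R n N by rewrite /r -E mulrC mulKf // pnatr_eq0 -lt0n.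
  by rewrite (FG_p _ A0) Hc Ec.
move=> H; exists (r R n N)%:C%C => i.
have r0 : 0 <= r R n N by rewrite /r divr_ge0 ?ler0n.
have q0 : 0 <= complex.Re (inner (F i) (G i)) by apply/Re_ge0/FG_diag_ge0.
have := H i; rewrite (FG_p _ A0) => /(congr1 Num.sqrt); rewrite !sqrtr_sqr !ger0_norm // => Eq.
by rewrite (real_ReE (ger0_real (FG_diag_ge0 _ A0 i))) /= Eq.
Qed.

Lemma en_unif : equal_norm F <-> one_uniform F G.
Proof.
split.
  move=> [c Hc]; exists (A^-1 * c ^+ 2) => i.
  by rewrite FG_inner // -(Hc i) vnorm2.
move=> [c Hc]; exists (sqrtC (A * c)) => i.
rewrite /vnorm -(Hc i) FG_inner // mulVKf //; exact: A_neq0.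
Qed.

Lemma ang_iff :
  (exists c : C, forall i j, i != j -> `|inner (F i) (F j)| = c) <->
  (exists c : C, forall i j, i != j -> inner (F i) (G j) * inner (F j) (G i) = c).
Proof.
split.
  move=> [c Hc]; exists (A^-1 * A^-1 * c ^+ 2) => i j ij.
  by rewrite FG_prod // FG_X // Hc.
move=> [c Hc]; exists (sqrtC (A * A * c)) => i j ij.
rewrite -(Hc i j ij) FG_prod // FG_X //.
have -> : A * A * (A^-1 * A^-1 * `|inner (F i) (F j)| ^+ 2) = `|inner (F i) (F j)| ^+ 2.
  by field; exact: A_neq0.
by rewrite sqrCK // normr_ge0.
Qed.

End Tight2.

Section Main.
Variable (R : realType) (n N : nat).
Local Notation C := (R[i]).
Local Notation vec := ('cV[C]_n).
Local Notation seqv := ('I_N -> vec).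

Lemma inF_mono m k (F G : seqv) : (k <= m)%N -> inF m F G -> inF k F G.
Proof.
elim: m => [|m IH]; first by rewrite leqn0 => /eqP ->.
rewrite leq_eqVlt => /orP [/eqP -> //|]; rewrite ltnS => km [H _].
exact: IH.
Qed.

Lemma inF_dual m (F G : seqv) : inF m F G -> dual_pair F G.
Proof. exact: inF_mono (leq0n m). Qed.

Lemma inF1_good (F G : seqv) : (n <= N)%N -> inF 1 F G -> forall i, p F G i = r R n N ^+ 2.
Proof.
move=> nN [[_ D] H] i.
have Npos : (0 < N)%N by case: N i {H D} => // [[]].
have [F0 [G0 [d0 e0]]] := harmonic R nN Npos.
apply: good D _ i; exact: le_trans (H F0 G0 d0) e0.
Qed.

Lemma eps_eq m (F G F1 G1 : seqv) :
  (forall L, Q (erasure L F G) = Q (erasure L F1 G1)) -> eps m F G = eps m F1 G1.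
Proof. by move=> H; apply: eq_bigr => L _; rewrite /frob -/(Q _) -/(Q _) H. Qed.

End Main.

Theorem theorem3p6 (R : realType) (n N : nat) (F : 'I_N -> 'cV[R[i]]_n) :
  (n <= N)%N ->
  tight F ->
  (exists (F' G' : 'I_N -> 'cV[R[i]]_n) (c : R),
      inF 1 F' G' /\
      forall i j : 'I_N, i != j ->
        complex.Re (inner (G' i) (G' j) * inner (F' j) (F' i)) = c) ->
  ((forall m : nat, (1 <= m <= N)%N -> inF m F (canon_dual F)) <->
     two_uniform F (canon_dual F)) /\
  (two_uniform F (canon_dual F) <-> equiangular F).
Proof.
move=> nN tF [F' [G' [c [HF' Hc]]]].
have [A [A0 FA]] := tight_op tF.
rewrite (canonE FA).
set G := fun i => A^-1 *: F i.
have DG : is_dual F G := tight_dual A0 FA.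
have dpG : dual_pair F G := conj (tight_frame tF) DG.
have r0 : 0 <= r R n N by rewrite /r divr_ge0 ?ler0n.
have DF' : is_dual F' G' := (inF_dual HF').2.
have goodF' := inF1_good nN HF'.
have HcX : forall i j, i != j -> complex.Re (X F' G' i j) = c.
  by move=> i j ij; rewrite /X; apply: Hc; rewrite eq_sym.
have E2 : two_uniform F G <-> equiangular F.
  rewrite /two_uniform /equiangular; split => [[u v]|[u v]]; split.
  - exact/(en_unif F A0).2.
  - exact/(ang_iff F A0).2.
  - exact/(en_unif F A0).1.
  - exact/(ang_iff F A0).1.
split => //.
split.
- move=> Hm; split.
    apply/(unif_good A0 DG) => i.
    have Npos : (0 < N)%N := leq_ltn_trans (leq0n i) (ltn_ord i).
    by apply: inF1_good nN (Hm 1%N _) i; rewrite leqnn Npos.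
  case: (leqP N 1) => [N1|N1].
    exists 0 => i j ij; exfalso; move/negP: ij; apply; apply/eqP/val_inj.
    have i0 : nat_of_ord i = 0%N by apply/eqP; rewrite -leqn0 -ltnS (leq_trans (ltn_ord i) N1).
    have j0 : nat_of_ord j = 0%N by apply/eqP; rewrite -leqn0 -ltnS (leq_trans (ltn_ord j) N1).
    by rewrite /= i0 j0.
  have Npos : (0 < N)%N by apply: ltn_trans N1.
  have goodF := inF1_good nN (Hm 1%N (_ : (1 <= 1 <= N)%N)).
  have {}goodF : forall i, p F G i = r R n N ^+ 2 by apply: goodF; rewrite leqnn Npos.
  have cav : c = avg R n N := off_const DF' goodF' N1 HcX.
  pose i0 : 'I_N := Ordinal Npos; pose j0 : 'I_N := Ordinal N1.
  have ij0 : i0 != j0 by [].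
  set V := r R n N ^+ 2 + r R n N ^+ 2 + 2 * avg R n N.
  have V0 : 0 <= V.
    have -> : V = p F' G' i0 + p F' G' j0 + 2 * complex.Re (X F' G' i0 j0).
      by rewrite !goodF' HcX // cav.
    by rewrite -Q_pair // Q_ge0.
  have eF' : eps 2 F' G' <= Num.sqrt V.
    apply: eps2_le; first exact: sqrtr_ge0.
    by move=> i j ij; rewrite !goodF' HcX // cav.
  have H2 : inF 2 F G by apply: Hm; rewrite N1.
  have eF : eps 2 F G <= Num.sqrt V := le_trans (H2.2 F' G' HF') eF'.
  have le : forall i j, i != j -> complex.Re (X F G i j) <= avg R n N.
    move=> i j ij; have := le_trans (eps2_ge F G ij) eF.
    rewrite ler_sqrt // !goodF /V => H; lra.
  have eq := all_le_avg DG goodF N1 le.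
  exists (avg R n N)%:C%C => i j ij.
  by rewrite (FG_prod F A0) (real_ReE (ger0_real (FG_X_ge0 F A0 i j))) eq.
- move=> [U [c0 Hc0]].
  have goodF := (unif_good A0 DG).1 U.
  have HX : forall i j, i != j -> complex.Re (X F G i j) = complex.Re c0.
    by move=> i j ij; rewrite -(FG_prod F A0) Hc0.
  have e1 : eps 1 F G <= r R n N.
    by apply: eps1_le => // i; rewrite goodF sqrtr_sqr ger0_norm.
  have inF1 : inF 1 F G.
    by split => // F1 G1 [_ D1]; exact: le_trans e1 (lower1 D1).
  elim=> [|[|k] IH] //.
  move=> /andP [_ kN].
  have N1 : (1 < N)%N by apply: leq_trans kN.
  have IHk : inF k.+1 F G by apply: IH; rewrite /= (ltnW kN).
  split => // F1 G1 H1.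
  have H11 : inF 1 F1 G1 by apply: inF_mono H1.
  have D1 := (inF_dual H1).2.
  have good1 := inF1_good nN H11.
  have cav : complex.Re c0 = avg R n N := off_const DG goodF N1 HX.
  have Npos : (0 < N)%N by apply: ltn_trans N1.
  pose i0 : 'I_N := Ordinal Npos; pose j0 : 'I_N := Ordinal N1.
  have ij0 : i0 != j0 by [].
  set V := r R n N ^+ 2 + r R n N ^+ 2 + 2 * avg R n N.
  have V0 : 0 <= V.
    have -> : V = p F G i0 + p F G j0 + 2 * complex.Re (X F G i0 j0).
      by rewrite !goodF HX // cav.
    by rewrite -Q_pair // Q_ge0.
  have eF : eps 2 F G <= Num.sqrt V.
    apply: eps2_le; first exact: sqrtr_ge0.
    by move=> i j ij; rewrite !goodF HX // cav.
  case: k {IH} kN IHk H1 => [|k] kN IHk H1.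
    have [i [j [ij Hij]]] := exists_ge_avg D1 good1 N1.
    apply: le_trans eF _; apply: le_trans _ (eps2_ge F1 G1 ij).
    by apply: ler_wsqrtr; rewrite !good1 /V; lra.
  have H12 : inF 2 F1 G1 by apply: inF_mono H1.
  have e12 : eps 2 F1 G1 <= Num.sqrt V := le_trans (H12.2 F G inF1) eF.
  have le1 : forall i j, i != j -> complex.Re (X F1 G1 i j) <= avg R n N.
    move=> i j ij; have := le_trans (eps2_ge F1 G1 ij) e12.
    rewrite ler_sqrt // !good1 /V => H; lra.
  have eq1 := all_le_avg D1 good1 N1 le1.
  rewrite (eps_eq _ (F1:=F1) (G1:=G1)) // => L.
  by rewrite (Q_unif L goodF HX) (Q_unif L good1 eq1) cav.
Qed.
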